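(* For all $n\ge 0$, the quadruples of statistics $(\operatorname{asc},\operatorname{des},\operatorname{MNA},\operatorname{MND})$ and $(\operatorname{des},\operatorname{asc},\operatorname{MND},\operatorname{MNA})$ are equidistributed on $S_n(231,312)$, i.e. $$\sum_{\pi\in S_n(231,312)} t_1^{\operatorname{asc}(\pi)}t_2^{\operatorname{des}(\pi)}t_3^{\operatorname{MNA}(\pi)}t_4^{\operatorname{MND}(\pi)}=\sum_{\pi\in S_n(231,312)} t_1^{\operatorname{des}(\pi)}t_2^{\operatorname{asc}(\pi)}t_3^{\operatorname{MND}(\pi)}t_4^{\operatorname{MNA}(\pi)}.$$
   Context: For $n\ge 0$, $S_n$ denotes the set of permutations $\pi=\pi_1\cdots\pi_n$ of $[n]=\{1,\dots,n\}$. $\pi$ avoids a pattern $\tau\in S_k$ if no subsequence $\pi_{i_1}\cdots\pi_{i_k}$ ($i_1<\dots<i_k$) satisfies $\pi_{i_a}<\pi_{i_b}\iff\tau_a<\tau_b$; $S_n(\tau,\rho)$ is the set of permutations in $S_n$ avoiding both $\tau$ and $\rho$. $\operatorname{asc}(\pi)$ (resp. $\operatorname{des}(\pi)$) is the number of $i\in[n-1]$ with $\pi_i<\pi_{i+1}$ (resp. $\pi_i>\pi_{i+1}$). $\operatorname{MNA}(\pi)$ is the maximum size of a set $I\subseteq[n-1]$ such that $\pi_i<\pi_{i+1}$ for all $i\in I$ and $|i-j|\ge 2$ for distinct $i,j\in I$; $\operatorname{MND}(\pi)$ is defined analogously with $\pi_i>\pi_{i+1}$. *)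

(* Defs.v *)
From mathcomp Require Import all_boot all_order all_algebra all_fingroup.
Set Implicit Arguments. Unset Strict Implicit. Unset Printing Implicit Defensive.

(* A permutation pi of [n] is represented by pi : 'S_n (a permutation of
   'I_n = {0,...,n-1}); its one-line notation is pi_1 ... pi_n with values
   shifted down by one (irrelevant for all statistics below). *)
Definition oneline n (pi : 'S_n) : seq nat := [seq val (pi i) | i <- enum 'I_n].

Definition contains_pattern (s tau : seq nat) : bool :=
  [exists m : (size s).-tuple bool,
    (size (mask m s) == size tau) &&
    [forall a : 'I_(size tau), forall b : 'I_(size tau),
      (nth 0 (mask m s) a < nth 0 (mask m s) b) == (nth 0 tau a < nth 0 tau b)]].

Definition avoids n (pi : 'S_n) (tau : seq nat) : bool :=
  ~~ contains_pattern (oneline pi) tau.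

(* 0-based positions: i is an ascent if i+1 < n and pi_i < pi_{i+1}. *)
Definition is_asc n (pi : 'S_n) (i : 'I_n) : bool :=
  (i.+1 < n) && (nth 0 (oneline pi) i < nth 0 (oneline pi) i.+1).
Definition is_des n (pi : 'S_n) (i : 'I_n) : bool :=
  (i.+1 < n) && (nth 0 (oneline pi) i > nth 0 (oneline pi) i.+1).

Definition asc n (pi : 'S_n) : nat := #|[set i | is_asc pi i]|.
Definition des n (pi : 'S_n) : nat := #|[set i | is_des pi i]|.

Definition nonadj n (P : 'I_n -> bool) (I : {set 'I_n}) : bool :=
  [forall i in I, P i] &&
  [forall i in I, forall j in I, (i != j) ==> ((i.+1 < j) || (j.+1 < i))].

Definition MNA n (pi : 'S_n) : nat :=
  \max_(I : {set 'I_n} | nonadj (is_asc pi) I) #|I|.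
Definition MND n (pi : 'S_n) : nat :=
  \max_(I : {set 'I_n} | nonadj (is_des pi) I) #|I|.

(* Main.v *)
Require Import Defs.
From mathcomp Require Import all_boot all_order all_algebra all_fingroup.
From mathcomp Require Import zify.
Set Implicit Arguments. Unset Strict Implicit. Unset Printing Implicit Defensive.

Fixpoint ef (d : nat -> bool) (k i : nat) : nat :=
  if k is k'.+1 then (if d i then ef d k' i.+1 else i) else i.
Fixpoint sf (d : nat -> bool) (k i : nat) : nat :=
  if k is k'.+1 then (if i is i'.+1 then (if d i' then sf d k' i' else i) else i) else i.
Implicit Types (d : nat -> bool).
Definition eb d n i := ef d n i.
Definition sb d i := sf d i i.
Definition Lb d n i := sb d i + eb d n i - i.

Lemma ef_ge d k i : i <= ef d k i.
Proof.
elim: k i => [|k IH] i //=. case: (d i) => //. have := IH i.+1; lia.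
Qed.

Lemma ef_D d k i j : i <= j < ef d k i -> d j.
Proof.
elim: k i => [|k IH] i /=; first by move=> Hx; exfalso; lia.
case Hi: (d i); last by move=> Hx; exfalso; lia.
move=> /= H. case: (eqVneq j i) => [-> //|hne]. apply: (IH i.+1). lia.
Qed.

Lemma ef_lt d n k i : (forall j, d j -> j.+1 < n) -> i < n -> ef d k i < n.
Proof.
move=> Hd. elim: k i => [|k IH] i //= hi.
case Hi: (d i) => //. apply: IH. exact: Hd.
Qed.

Lemma ef_stop d n k i : (forall j, d j -> j.+1 < n) -> i < n -> n <= i + k ->
  ~~ d (ef d k i).
Proof.
move=> Hd. elim: k i => [|k IH] i /=; first by move=> Hx Hy; exfalso; lia.
move=> hi hk. case Hi: (d i); last by rewrite Hi.
apply: IH; first exact: Hd. lia.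
Qed.

Lemma sf_le d k i : sf d k i <= i.
Proof.
elim: k i => [|k IH] [|i] //=. case: (d i) => //. have := IH i; lia.
Qed.

Lemma sf_D d k i j : sf d k i <= j < i -> d j.
Proof.
elim: k i => [|k IH] [|i] /=; try by move=> Hx; exfalso; lia.
case Hi: (d i); last by move=> Hx; exfalso; lia.
move=> /= H. case: (eqVneq j i) => [-> //|hne]. apply: (IH i). lia.
Qed.

Lemma sf_stop d k i : i <= k -> sf d k i = 0 \/ ~~ d (sf d k i).-1.
Proof.
elim: k i => [|k IH] [|i] /=; try by move=> _; left.
- move=> Hx; exfalso; lia.
- move=> hi. case Hi: (d i); first by apply: IH.
  by right; rewrite /= Hi.
Qed.


Lemma eb_ge d n i : i <= eb d n i. Proof. exact: ef_ge. Qed.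
Lemma eb_D d n i j : i <= j < eb d n i -> d j. Proof. exact: ef_D. Qed.
Lemma eb_lt d n i : (forall j, d j -> j.+1 < n) -> i < n -> eb d n i < n.
Proof. exact: ef_lt. Qed.
Lemma eb_stop d n i : (forall j, d j -> j.+1 < n) -> i < n -> ~~ d (eb d n i).
Proof. move=> Hd hi; apply: (ef_stop Hd hi); lia. Qed.
Lemma sb_le d i : sb d i <= i. Proof. exact: sf_le. Qed.
Lemma sb_D d i j : sb d i <= j < i -> d j. Proof. exact: sf_D. Qed.
Lemma sb_stop d i : sb d i = 0 \/ ~~ d (sb d i).-1. Proof. exact: sf_stop. Qed.

Lemma eb_char d n i x : (forall j, d j -> j.+1 < n) -> i < n -> i <= x ->
  (forall k, i <= k < x -> d k) -> ~~ d x -> eb d n i = x.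
Proof.
move=> Hd hi hix Hx Hsx.
have h1 := eb_ge d n i. have h2 := eb_stop Hd hi.
case: (ltngtP (eb d n i) x) => // h.
- by move: h2; rewrite Hx //; lia.
- by move: Hsx; rewrite (eb_D (n:=n) (i:=i)) //; lia.
Qed.

Lemma sb_char d i x : x <= i -> (forall k, x <= k < i -> d k) ->
  (x = 0 \/ ~~ d x.-1) -> sb d i = x.
Proof.
move=> hxi Hx Hsx.
have h1 := sb_le d i. have h2 := sb_stop d i.
case: (ltngtP (sb d i) x) => // h.
- case: Hsx => [hx0|]; first lia.
  by rewrite (sb_D (i:=i)) //; lia.
- case: h2 => [h0|]; first lia.
  by rewrite Hx //; lia.
Qed.

Lemma blk_same d n i j : (forall j, d j -> j.+1 < n) -> i < n ->
  sb d i <= j <= eb d n i -> sb d j = sb d i /\ eb d n j = eb d n i.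
Proof.
move=> Hd hi hj.
have hD : forall k, sb d i <= k < eb d n i -> d k.
  move=> k hk. case: (ltnP k i) => hki.
  - apply: (sb_D (i:=i)); lia.
  - apply: (eb_D (n:=n) (i:=i)); lia.
have hlt := eb_lt Hd hi.
split.
- apply: sb_char; first lia.
  + move=> k hk; apply: hD; lia.
  + exact: sb_stop.
- apply: (eb_char Hd).
  + lia.
  + lia.
  + move=> k hk; apply: hD; lia.
  + exact: eb_stop.
Qed.

Lemma blk_diff d n i j : (forall j, d j -> j.+1 < n) -> i < n ->
  eb d n i < j -> eb d n i < sb d j.
Proof.
move=> Hd hi hj. rewrite ltnNge; apply/negP => h.
have := eb_stop Hd hi. rewrite (sb_D (i:=j)) //. lia.
Qed.

Lemma Lb_range d n i : sb d i <= Lb d n i <= eb d n i.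
Proof. rewrite /Lb. have := sb_le d i; have := eb_ge d n i. lia. Qed.

Lemma Lb_lt d n i : (forall j, d j -> j.+1 < n) -> i < n -> Lb d n i < n.
Proof. move=> Hd hi. have := Lb_range d n i. have := eb_lt Hd hi. lia. Qed.

Lemma Lb_same d n i j : (forall j, d j -> j.+1 < n) -> i < j < n ->
  j <= eb d n i -> Lb d n j < Lb d n i.
Proof.
move=> Hd hij hj.
have [h1 h2] := @blk_same d n i j Hd (ltac:(lia)) (ltac:(have := sb_le d i; lia)).
rewrite /Lb h1 h2. have := sb_le d i. lia.
Qed.

Lemma Lb_diff d n i j : (forall j, d j -> j.+1 < n) -> i < j < n ->
  eb d n i < j -> Lb d n i < Lb d n j.
Proof.
move=> Hd hij hj.
have := @blk_diff d n i j Hd (ltac:(lia)) hj.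
have := Lb_range d n i. have := Lb_range d n j. lia.
Qed.

Lemma Lb_inj d n i j : (forall j, d j -> j.+1 < n) -> i < n -> j < n ->
  Lb d n i = Lb d n j -> i = j.
Proof.
move=> Hd hi hj.
case: (ltngtP i j) => // h.
- case: (leqP j (eb d n i)) => h'.
  + by have := @Lb_same d n i j Hd (ltac:(lia)) h'; lia.
  + by have := @Lb_diff d n i j Hd (ltac:(lia)) h'; lia.
- case: (leqP i (eb d n j)) => h'.
  + by have := @Lb_same d n j i Hd (ltac:(lia)) h'; lia.
  + by have := @Lb_diff d n j i Hd (ltac:(lia)) h'; lia.
Qed.

Lemma Lb_des d n i : (forall j, d j -> j.+1 < n) -> i.+1 < n ->
  (Lb d n i.+1 < Lb d n i) = d i.
Proof.
move=> Hd hi. case Hdi: (d i).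
- apply: Lb_same => //; first lia.
  have := eb_ge d n i. have := eb_stop Hd (ltac:(lia) : i < n).
  case: (eqVneq (eb d n i) i) => [->|]; first by rewrite Hdi.
  lia.
- have E : eb d n i = i by apply: eb_char => //; [lia|lia|rewrite Hdi].
  apply/negbTE; rewrite -leqNgt; apply: ltnW; apply: Lb_diff => //; lia.
Qed.

Lemma Lb_231 d n a b c : (forall j, d j -> j.+1 < n) -> a < b -> b < c -> c < n ->
  ~ (Lb d n c < Lb d n a < Lb d n b).
Proof.
move=> Hd hab hbc hc /andP[h1 h2].
case: (leqP b (eb d n a)) => h.
- have := @Lb_same d n a b Hd (ltac:(lia)) h. lia.
- have := @Lb_diff d n a c Hd (ltac:(lia)) (ltac:(lia)). lia.
Qed.

Lemma Lb_312 d n a b c : (forall j, d j -> j.+1 < n) -> a < b -> b < c -> c < n ->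
  ~ (Lb d n b < Lb d n c < Lb d n a).
Proof.
move=> Hd hab hbc hc /andP[h1 h2].
case: (leqP c (eb d n a)) => h.
- have [_ h3] := @blk_same d n a b Hd (ltac:(lia)) (ltac:(have := sb_le d a; lia)).
  have := @Lb_same d n b c Hd (ltac:(lia)) (ltac:(lia)). lia.
- have := @Lb_diff d n a c Hd (ltac:(lia)) h. lia.
Qed.

Lemma pigeon m m' (f : nat -> nat) : (forall x, x < m -> f x < m') ->
  (forall x y, x < m -> y < m -> f x = f y -> x = y) -> m <= m'.
Proof.
move=> Hf Hinj.
have U : uniq (map f (iota 0 m)).
  rewrite map_inj_in_uniq ?iota_uniq // => x y; rewrite !mem_iota => hx hy.
  apply: Hinj; lia.
have := uniq_leq_size U (s2 := iota 0 m').
rewrite size_map !size_iota; apply=> v /mapP [x]; rewrite !mem_iota => hx ->.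
have := Hf x; lia.
Qed.

Definition isclass n (p : nat -> nat) :=
  [/\ forall a b, a < n -> b < n -> p a = p b -> a = b,
      forall v, v < n -> exists2 q, q < n & p q = v,
      forall a, a < n -> p a < n,
      forall a b c, a < b -> b < c -> c < n -> ~ (p c < p a < p b) &
      forall a b c, a < b -> b < c -> c < n -> ~ (p b < p c < p a)].

Lemma cut_lt n p k : isclass n p -> k.+1 < n -> p k < p k.+1 ->
  forall a b, a <= k -> k < b -> b < n -> p a < p b.
Proof.
move=> [Hinj Hsurj Hlt N231 N312] hk hasc.
have S1 : forall a, a <= k -> p a < p k.+1.
  move=> a ha. case: (eqVneq a k) => [->//|hne].
  have hne' : p a <> p k.+1 by move=> /Hinj E; have := E (ltac:(lia)) (ltac:(lia)); lia.
  rewrite ltnNge leq_eqVlt; apply/negP => /orP[/eqP E|h]; first by apply: hne'.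
  apply: (N312 a k k.+1); [lia|lia|lia|]. by rewrite hasc h.
have S2 : forall b, k < b -> b < n -> p k < p b.
  move=> b hb hbn. case: (eqVneq b k.+1) => [->//|hne].
  have hne' : p b <> p k by move=> /Hinj E; have := E (ltac:(lia)) (ltac:(lia)); lia.
  rewrite ltnNge leq_eqVlt; apply/negP => /orP[/eqP E|h]; first by apply: hne'.
  apply: (N231 k k.+1 b); [lia|lia|lia|]. by rewrite hasc h.
move=> a b ha hb hbn.
case: (eqVneq a k) => [->|hak]; first exact: S2.
case: (eqVneq b k.+1) => [->|hbk]; first exact: S1.
have hne' : p b <> p a by move=> /Hinj E; have := E (ltac:(lia)) (ltac:(lia)); lia.
rewrite ltnNge leq_eqVlt; apply/negP => /orP[/eqP E|h]; first by apply: hne'.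
apply: (N231 a k.+1 b); [lia|lia|lia|]. by rewrite h S1 //; lia.
Qed.

Lemma cut n p k : isclass n p -> k.+1 < n -> p k < p k.+1 ->
  (forall a, a <= k -> p a <= k) /\ (forall b, k < b -> b < n -> k < p b).
Proof.
move=> Hc hk hasc. have CL := cut_lt Hc hk hasc.
case: Hc => [Hinj Hsurj Hlt N231 N312].
split.
- move=> a0 ha0. rewrite leqNgt; apply/negP => hgt.
  have hpa0 := Hlt a0 (ltac:(lia)).
  have P : n - k.+1 <= n - (p a0).+1.
    apply: (@pigeon _ _ (fun x => p (x + k.+1) - (p a0).+1)).
    + move=> x hx. have := CL a0 (x + k.+1) ha0 (ltac:(lia)) (ltac:(lia)).
      have := Hlt (x + k.+1) (ltac:(lia)). lia.
    + move=> x y hx hy E.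
      have h1 := CL a0 (x + k.+1) ha0 (ltac:(lia)) (ltac:(lia)).
      have h2 := CL a0 (y + k.+1) ha0 (ltac:(lia)) (ltac:(lia)).
      have E2 : p (x + k.+1) = p (y + k.+1) by lia.
      have := Hinj (x + k.+1) (y + k.+1) (ltac:(lia)) (ltac:(lia)) E2. lia.
  lia.
- move=> b0 hb0 hb0n. rewrite ltnNge; apply/negP => hle.
  have P : k.+2 <= k.+1.
    apply: (@pigeon _ _ (fun x => if x == k.+1 then p b0 else p x)).
    + move=> x hx. case: (eqVneq x k.+1) => [_|hx'] //.
      have := CL x b0 (ltac:(lia)) hb0 hb0n. lia.
    + move=> x y hx hy.
      case: (eqVneq x k.+1) => hx'; case: (eqVneq y k.+1) => hy' E.
      * lia.
      * have := Hinj b0 y hb0n (ltac:(lia)) E. lia.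
      * have := Hinj x b0 (ltac:(lia)) hb0n E. lia.
      * exact: Hinj x y (ltac:(lia)) (ltac:(lia)) E.
  lia.
Qed.

Definition desp n (p : nat -> nat) i := (i.+1 < n) && (p i.+1 < p i).

Lemma F2 n p j : isclass n p -> desp n p j -> (p j.+1).+1 = p j.
Proof.
move=> [Hinj Hsurj Hlt N231 N312] /andP[hj hd].
apply/eqP; rewrite eqn_leq hd /=. rewrite leqNgt; apply/negP => hgt.
have [q hq Eq] := Hsurj (p j.+1).+1 (ltac:(have := Hlt j (ltac:(lia)); lia)).
case: (ltngtP q j) => hqj.
- by apply: (N231 q j j.+1); [lia|lia|lia|]; rewrite Eq; lia.
- case: (ltngtP q j.+1) => hqj1.
  + lia.
  + by apply: (N312 j j.+1 q); [lia|lia|lia|]; rewrite Eq; lia.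
  + by move: Eq; rewrite hqj1; lia.
- by move: Eq; rewrite hqj; lia.
Qed.

Lemma class_formula n p i : isclass n p -> i < n ->
  p i + i = sb (desp n p) i + eb (desp n p) n i.
Proof.
move=> Hc hi.
set d := desp n p.
have Hd : forall j, d j -> j.+1 < n by move=> j /andP[].
set S := sb d i. set E := eb d n i.
have hS := sb_le d i. have hE := eb_ge d n i. have hEn := eb_lt Hd hi.
have hSE : forall k, S <= k < E -> d k.
  move=> k hk. case: (ltnP k i) => hki.
  - apply: (sb_D (i:=i)); rewrite -/S; lia.
  - apply: (eb_D (n:=n) (i:=i)); rewrite -/E; lia.
have Hconst : forall k, S + k <= E -> p (S + k) + (S + k) = p S + S.
  elim=> [|k IH] hk; first by rewrite addn0.
  have := F2 Hc (hSE (S + k) (ltac:(lia))). have := IH (ltac:(lia)).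
  rewrite addnS. lia.
have Hi : p i + i = p S + S by have := Hconst (i - S) (ltac:(lia)); rewrite subnKC.
have HE : p E + E = p S + S by have := Hconst (E - S) (ltac:(lia)); rewrite subnKC //; lia.
have [Hinj Hsurj Hlt N231 N312] := Hc.
have Hne : forall k, k.+1 < n -> ~~ d k -> p k < p k.+1.
  move=> k hk; rewrite /d /desp hk /= -leqNgt leq_eqVlt => /orP[/eqP E'|//].
  by have := Hinj k k.+1 (ltac:(lia)) (ltac:(lia)) E'; lia.
have Up : p S <= E.
  case: (ltnP E.+1 n) => hE1.
  - have [C1 _] := cut Hc hE1 (Hne E hE1 (eb_stop Hd hi)).
    apply: C1; lia.
  - have := Hlt S (ltac:(lia)); lia.
have Lo : S <= p E.
  case: (posnP S) => hS0; first by rewrite hS0.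
  case: (sb_stop d i) => [|hst]; first by rewrite -/S; lia.
  rewrite -/S in hst.
  have hS1 : S.-1.+1 < n by lia.
  have [_ C2] := cut Hc hS1 (Hne _ hS1 hst).
  have := C2 E (ltac:(lia)) hEn. lia.
lia.
Qed.

Definition iso3 (u t : seq nat) := [forall a : 'I_3, forall b : 'I_3,
  (nth 0 u a < nth 0 u b) == (nth 0 t a < nth 0 t b)].

Lemma containsP (s : seq nat) x y z :
  reflect (exists a b c, [/\ a < b, b < c, c < size s &
       iso3 [:: nth 0 s a; nth 0 s b; nth 0 s c] [:: x; y; z]])
    (contains_pattern s [:: x; y; z]).
Proof.
have E : map (nth 0 s) (iota 0 (size s)) = s := mkseq_nth 0 s.
apply: (iffP existsP).
- case=> m /andP[/eqP Hsz Hiso].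
  have Hms : mask m s = map (nth 0 s) (mask m (iota 0 (size s))).
    by rewrite map_mask E.
  have Hsorted : sorted ltn (mask m (iota 0 (size s))).
    exact: (sorted_mask ltn_trans _ (iota_ltn_sorted 0 _)).
  have Hsub : forall v, v \in mask m (iota 0 (size s)) -> v < size s.
    by move=> v /mem_mask; rewrite mem_iota.
  rewrite Hms in Hsz Hiso; rewrite size_map in Hsz.
  move: (mask m (iota 0 (size s))) Hsz Hiso Hsorted Hsub => r.
  case: r => [|a [|b [|c [|? ?]]]] //= _ Hiso /andP[hab /andP[hbc _]] Hsub.
  exists a, b, c; split => //; apply: Hsub; by rewrite !inE eqxx ?orbT.
- case=> a [b [c [hab hbc hc Hiso]]].
  pose mm := map (fun i => i \in [:: a; b; c]) (iota 0 (size s)).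
  have Hmm : size mm == size s by rewrite size_map size_iota.
  exists (Tuple Hmm).
  have E2 : mask mm s = map (nth 0 s) (mask mm (iota 0 (size s))).
    by rewrite map_mask E.
  have -> : mask (Tuple Hmm) s = [:: nth 0 s a; nth 0 s b; nth 0 s c].
    rewrite /= E2 /mm -filter_mask.
    have -> : [seq i <- iota 0 (size s) | i \in [:: a; b; c]] = [:: a; b; c] => //.
    apply: (irr_sorted_eq ltn_trans ltnn).
    + exact: (sorted_filter ltn_trans _ (iota_ltn_sorted 0 _)).
    + by rewrite /= hab hbc.
    + move=> v; rewrite mem_filter mem_iota.
      apply/idP/idP => [/andP[-> _] //|H]; rewrite H /=.
      move: H; rewrite !inE => /or3P [] /eqP ->; lia.
  by rewrite eqxx.
Qed.

Lemma iso231 u0 u1 u2 : iso3 [:: u0; u1; u2] [:: 2; 3; 1] = (u2 < u0 < u1).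
Proof.
apply/idP/idP.
- move=> /forallP H.
  have h1 := forallP (H (@Ordinal 3 2 isT)) (@Ordinal 3 0 isT).
  have h2 := forallP (H (@Ordinal 3 0 isT)) (@Ordinal 3 1 isT).
  by rewrite /= in h1 h2; rewrite (eqP h1) (eqP h2).
- move=> /andP[h1 h2]; apply/forallP => -[[|[|[|i]]] hi];
    apply/forallP => -[[|[|[|j]]] hj] //=; apply/eqP; lia.
Qed.

Lemma iso312 u0 u1 u2 : iso3 [:: u0; u1; u2] [:: 3; 1; 2] = (u1 < u2 < u0).
Proof.
apply/idP/idP.
- move=> /forallP H.
  have h1 := forallP (H (@Ordinal 3 1 isT)) (@Ordinal 3 2 isT).
  have h2 := forallP (H (@Ordinal 3 2 isT)) (@Ordinal 3 0 isT).
  by rewrite /= in h1 h2; rewrite (eqP h1) (eqP h2).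
- move=> /andP[h1 h2]; apply/forallP => -[[|[|[|i]]] hi];
    apply/forallP => -[[|[|[|j]]] hj] //=; apply/eqP; lia.
Qed.

Definition pp n (pi : 'S_n) i := nth 0 (oneline pi) i.
Definition cls n (pi : 'S_n) := avoids pi [:: 2; 3; 1] && avoids pi [:: 3; 1; 2].

Lemma size_oneline n (pi : 'S_n) : size (oneline pi) = n.
Proof. by rewrite size_map size_enum_ord. Qed.

Lemma ppE n (pi : 'S_n) (i : 'I_n) : pp pi i = pi i.
Proof.
by rewrite /pp /oneline (nth_map i) ?size_enum_ord // nth_ord_enum.
Qed.

Lemma pp_basic n (pi : 'S_n) :
  [/\ forall a b, a < n -> b < n -> pp pi a = pp pi b -> a = b,
      forall v, v < n -> exists2 q, q < n & pp pi q = v &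
      forall a, a < n -> pp pi a < n].
Proof.
split.
- move=> a b ha hb. rewrite -[a]/(nat_of_ord (Ordinal ha)) -[b]/(nat_of_ord (Ordinal hb)).
  rewrite !ppE => /val_inj /perm_inj. by move=> [].
- move=> v hv. exists ((pi^-1)%g (Ordinal hv)) => //.
  by rewrite ppE permKV.
- move=> a ha. rewrite -[a]/(nat_of_ord (Ordinal ha)) ppE. exact: ltn_ord.
Qed.

Lemma clsP n (pi : 'S_n) : reflect (isclass n (pp pi)) (cls pi).
Proof.
have [B1 B2 B3] := pp_basic pi.
apply: (iffP andP).
- move=> [H1 H2]; split => //.
  + move=> a b c hab hbc hc H. move/negP: H1; apply. apply/containsP.
    exists a, b, c; rewrite size_oneline; split => //. by rewrite iso231.
  + move=> a b c hab hbc hc H. move/negP: H2; apply. apply/containsP.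
    exists a, b, c; rewrite size_oneline; split => //. by rewrite iso312.
- move=> [_ _ _ N231 N312]; split; apply/negP => /containsP [a [b [c [hab hbc hc]]]];
    rewrite size_oneline in hc.
  + rewrite iso231 => H. exact: (N231 a b c).
  + rewrite iso312 => H. exact: (N312 a b c).
Qed.

Definition mkd n (D : nat -> bool) i := (i.+1 < n) && D i.
Lemma Hd_mkd n D : forall j, mkd n D j -> j.+1 < n.
Proof. by move=> j /andP[]. Qed.

Definition Lfun n D (i : 'I_n) : 'I_n := Ordinal (Lb_lt (@Hd_mkd n D) (ltn_ord i)).
Lemma Lfun_inj n D : injective (@Lfun n D).
Proof.
move=> i j /(congr1 val) /= E. apply: val_inj => /=.
exact: (Lb_inj (@Hd_mkd n D) (ltn_ord i) (ltn_ord j) E).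
Qed.
Definition Lperm n D : 'S_n := perm (@Lfun_inj n D).

Lemma Lperm_pp n D i : i < n -> pp (Lperm n D) i = Lb (mkd n D) n i.
Proof.
move=> hi. rewrite -[i]/(nat_of_ord (Ordinal hi)) ppE permE. by [].
Qed.

Lemma Lperm_cls n D : cls (Lperm n D).
Proof.
have [B1 B2 B3] := pp_basic (Lperm n D).
apply/clsP; split => // a b c hab hbc hc;
  rewrite !Lperm_pp; try lia.
- exact: (Lb_231 (@Hd_mkd n D) hab hbc hc).
- exact: (Lb_312 (@Hd_mkd n D) hab hbc hc).
Qed.

Lemma Lperm_des n D (i : 'I_n) : is_des (Lperm n D) i = mkd n D i.
Proof.
rewrite /is_des. case: (ltnP i.+1 n) => hi /=; last first.
  by rewrite /mkd ltnNge hi.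
have h0 : (i:nat) < n := ltn_ord i. rewrite -/(pp _ i) -/(pp _ i.+1) !Lperm_pp //.
exact: (Lb_des (@Hd_mkd n D) hi).
Qed.

Lemma asc_des n (pi : 'S_n) (i : 'I_n) : is_asc pi i = (i.+1 < n) && ~~ is_des pi i.
Proof.
rewrite /is_asc /is_des. case: (ltnP i.+1 n) => hi //=.
have [B1 _ _] := pp_basic pi.
rewrite -/(pp _ i) -/(pp _ i.+1) -leqNgt [X in _ = X]leq_eqVlt.
case: (eqVneq (pp pi i) (pp pi i.+1)) => E //=.
have := B1 _ _ (ltn_ord i) hi E. lia.
Qed.

Lemma ef_ext d1 d2 k i : d1 =1 d2 -> ef d1 k i = ef d2 k i.
Proof. move=> H; elim: k i => [|k IH] i //=; by rewrite H IH. Qed.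
Lemma sf_ext d1 d2 k i : d1 =1 d2 -> sf d1 k i = sf d2 k i.
Proof. move=> H; elim: k i => [|k IH] [|i] //=; by rewrite H IH. Qed.

Lemma cls_uniq n (pi1 pi2 : 'S_n) : cls pi1 -> cls pi2 ->
  (forall i : 'I_n, is_des pi1 i = is_des pi2 i) -> pi1 = pi2.
Proof.
move=> /clsP C1 /clsP C2 H.
have Ed : desp n (pp pi1) =1 desp n (pp pi2).
  move=> j. rewrite /desp. case: (ltnP j.+1 n) => hj //=.
  have := H (Ordinal (ltac:(lia) : j < n)). rewrite /is_des /= hj /=. by rewrite /pp.
apply/permP => i.
have E1 := class_formula C1 (ltn_ord i). have E2 := class_formula C2 (ltn_ord i).
rewrite !ppE in E1 E2.
rewrite /sb /eb (sf_ext _ _ Ed) (ef_ext _ _ Ed) in E1.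
apply: val_inj => /=. rewrite /sb /eb in E2. lia.
Qed.

Definition hmap n (pi : 'S_n) : 'S_n :=
  if cls pi then Lperm n (fun i => pp pi i < pp pi i.+1) else pi.

Lemma hmap_props n (pi : 'S_n) : cls pi ->
  [/\ cls (hmap pi), (forall i, is_des (hmap pi) i = is_asc pi i) &
      (forall i, is_asc (hmap pi) i = is_des pi i)].
Proof.
move=> Hc. have Hd : forall i, is_des (hmap pi) i = is_asc pi i.
  by move=> i; rewrite /hmap Hc Lperm_des.
split => //; first by rewrite /hmap Hc Lperm_cls.
move=> i. rewrite asc_des Hd asc_des.
case hi: (i.+1 < n) => /=; first by rewrite negbK.
by rewrite /is_des hi.
Qed.

Lemma hmap_cls n (pi : 'S_n) : cls (hmap pi) = cls pi.
Proof.
case Hc: (cls pi); last by rewrite /hmap Hc.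
by have [] := hmap_props Hc.
Qed.

Lemma hmap_inv n : involutive (@hmap n).
Proof.
move=> pi. case Hc: (cls pi); last by rewrite /hmap Hc Hc.
have [C1 D1 A1] := hmap_props Hc.
have [C2 D2 A2] := hmap_props C1.
apply: cls_uniq => // i. by rewrite D2 A1.
Qed.

Lemma nonadj_ext n (P Q : 'I_n -> bool) I : P =1 Q -> nonadj P I = nonadj Q I.
Proof.
move=> H. rewrite /nonadj. congr (_ && _). apply: eq_forallb => i. by rewrite H.
Qed.

Unset Implicit Arguments.
Local Open Scope ring_scope.

Theorem theorem12 (R : comNzRingType) (n : nat) (t1 t2 t3 t4 : R) :
  \sum_(pi : 'S_n | (avoids pi [:: 2; 3; 1]%N) && (avoids pi [:: 3; 1; 2]%N))
     t1 ^+ asc pi * t2 ^+ des pi * t3 ^+ MNA pi * t4 ^+ MND pi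
  = \sum_(pi : 'S_n | (avoids pi [:: 2; 3; 1]%N) && (avoids pi [:: 3; 1; 2]%N))
     t1 ^+ des pi * t2 ^+ asc pi * t3 ^+ MND pi * t4 ^+ MNA pi.
Proof.
rewrite (reindex_inj (inv_inj (@hmap_inv n))) /=.
apply: eq_big => pi.
- exact: (hmap_cls pi).
- move=> Hc0. have Hc : cls pi by rewrite -hmap_cls. have [_ D A] := hmap_props Hc.
  have E1 : asc (hmap pi) = des pi.
    by apply: eq_card => i; rewrite !inE A.
  have E2 : des (hmap pi) = asc pi.
    by apply: eq_card => i; rewrite !inE D.
  have E3 : MNA (hmap pi) = MND pi.
    by rewrite /MNA /MND; apply: eq_bigl => I; apply: nonadj_ext.
  have E4 : MND (hmap pi) = MNA pi.
    by rewrite /MNA /MND; apply: eq_bigl => I; apply: nonadj_ext.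
  by rewrite E1 E2 E3 E4.
Qed.
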